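(* Let $\mathcal A$ be a commutative semiring, $n\ge 2$, $V_n$ the free $\mathcal A$-module with basis $b_0,\dots,b_{n-1}$, $f\in\operatorname{End}_{\mathcal A}(V_n)$, $D(z)$ the Hasse–Schmidt derivation on $\bigwedge V_n$ associated with $f$, and $\overline D(z)$ its quasi-inverse (all as described in the context). Then for all $u,v\in\bigwedge^{>0}V_n=\bigoplus_{r\ge1}\bigwedge^rV_n$, $$\overline D(z)\bigl(D(z)u\wedge v\bigr)\ \succeq\ u\wedge \overline D(z)v .$$
   Context: Grassmann semialgebra. $\bigwedge V_n=\bigoplus_{r\ge0}\bigwedge^rV_n$ is the graded associative $\mathcal A$-semialgebra with product $\wedge$ such that $\bigwedge^0V_n=\mathcal A$, $\bigwedge^1V_n=V_n$, and for $r\ge2$, $\bigwedge^rV_n$ is the free $\mathcal A$-module with basis $\{b_I,b_I': I\subseteq\{0,\dots,n-1\},|I|=r\}$ (rank $2\binom nr$; zero if $r>n$), where $b_I=b_{i_1}\wedge\cdots\wedge b_{i_r}$ for $I=\{i_1<\dots<i_r\}$. On each $\bigwedge^rV_n$, $r\ge2$, the negation map $(-)$ is the $\mathcal A$-linear involution exchanging $b_I$ and $b_I'$; it is compatible with $\wedge$ ($((-)x)\wedge y=x\wedge((-)y)=(-)(x\wedge y)$ in degrees $\ge2$), $b_i\wedge b_i=\mathbb 0$, and $u\wedge w=(-)(w\wedge u)$ for $u,w\in V_n$. Hence a product $b_{j_1}\wedge\cdots\wedge b_{j_r}$ is $\mathbb 0$ if two indices coincide, and otherwise equals $b_I$ or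 $b_I'=(-)b_I$ according as the permutation sorting $(j_1,\dots,j_r)$ increasingly is even or odd. Write $x(-)y:=x+((-)y)$ and $(-)^j$ for the $j$-fold application of $(-)$. A quasi-zero is an element $x(-)x$. For $x,y$ of the same degree $\ge2$, $x\succeq y$ means $x=y+d$ with $d$ in the ideal generated by the quasi-zeros and all $w\wedge w$, $w\in V_n$; for power series in $z$ with such coefficients, $\succeq$ is meant coefficientwise. Hasse–Schmidt derivation. $D(z)=\sum_{i\ge0}D_iz^i$ with $D_i\in\operatorname{End}_{\mathcal A}(\bigwedge V_n)$ preserving each $\bigwedge^rV_n$, $D(z)(u\wedge v)=D(z)u\wedge D(z)v$ (i.e. $D_k(u\wedge v)=\sum_{i+j=k}D_iu\wedge D_jv$), and $D_iv=f^i(v)$ for $v\in V_n$; thus $D(z)(u_1\wedge\cdots\wedge u_r)=D(z)u_1\wedge\cdots\wedge D(z)u_r$ with $D(z)u_k=\sum_i f^i(u_k)z^i$, and $D_1=f$ on $V_n$. Operators act on power series in $z$ coefficientwise. Quasi-inverse. For $r\ge2$ and $u_1,\dots,u_r\in V_n$, $\overline D(z)(u_1\wedge\cdots\wedge u_r)=\sum_{j=0}^r z^j\,(-)^j\sum_{S\subseteq\{1,\dots,r\},|S|=j}u_1^S\wedge\cdots\wedge u_r^S$, where $u_k^S=f(u_k)$ if $k\in S$ and $u_k^S=u_k$ otherwise, extended additively; e.g. $\overline D(z)(u\wedge v)=u\wedge v+(f(v)\wedge u+v\wedge f(u))z+(f(u)\wedge f(v))z^2$. Write $\overline D(z)=\sum_j\overline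 D_jz^j$. For $u\in\bigwedge^{\ge1}V_n$ and $v=v_1\wedge\cdots\wedge v_s$ ($s\ge1$, $v_k\in V_n$), $u\wedge\overline D(z)v:=\sum_{j}z^j(-)^j\sum_{|S|=j}u\wedge v_1^S\wedge\cdots\wedge v_s^S$ (for $s\ge2$ this is $u\wedge(\overline D(z)v)$; for $s=1$ it is $u\wedge v+z\,(-)(u\wedge f(v))$), extended additively in $v$. *)

(* Defs.v *)
From mathcomp Require Import all_boot all_order all_algebra.
Set Implicit Arguments.
Unset Strict Implicit.
Unset Printing Implicit Defensive.
Import GRing.Theory.
Local Open Scope ring_scope.

Section Grassmann.
Variables (A : comPzSemiRingType) (n : nat).

(* Index of basis elements of /\ V_n : (I, false) is b_I and (I, true) is b_I'.
   For |I| <= 1 only (I, false) is a genuine basis element (b_emptyset = 1 in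
   degree 0, and b_{i} = b_i in V_n); the slots (I, true), |I| <= 1, are
   required to carry coefficient 0 (predicate [wf]). *)
Definition gkey := ({set 'I_n} * bool)%type.
Definition gelt := {ffun gkey -> A}.

Definition gzero : gelt := [ffun => 0].
Definition gadd (x y : gelt) : gelt := [ffun k => x k + y k].
Definition gscale (a : A) (x : gelt) : gelt := [ffun k => a * x k].
Definition gsum (I : finType) (F : I -> gelt) : gelt := \big[gadd/gzero]_(i : I) F i.
Definition gbasis (k : gkey) : gelt := [ffun k' => if k' == k then 1 else 0].
Definition gone : gelt := gbasis (set0, false).

Definition wf (x : gelt) : Prop := forall I : {set 'I_n}, (#|I| <= 1)%N -> x (I, true) = 0.
(* elements of /\^{>0} V_n = (+)_{r >= 1} /\^r V_n *)
Definition pos_part (x : gelt) : Prop := wf x /\ x (set0, false) = 0.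
(* elements of (+)_{r >= 2} /\^r V_n, where the negation map lives *)
Definition deg_ge2 (x : gelt) : Prop := forall k : gkey, (#|k.1| <= 1)%N -> x k = 0.

(* negation map (-): exchanges b_I and b_I' (used in degrees >= 2 only) *)
Definition gneg (x : gelt) : gelt := [ffun k => x (k.1, ~~ k.2)].
Definition gnegn (j : nat) (x : gelt) : gelt := if odd j then gneg x else x.

Definition ninv (I J : {set 'I_n}) : nat :=
  #|[set p : 'I_n * 'I_n | (p.1 \in I) && (p.2 \in J) && (p.2 < p.1)%N]|.

Definition wedge_basis (k1 k2 : gkey) : gelt :=
  if [disjoint k1.1 & k2.1]
  then gbasis (k1.1 :|: k2.1, k1.2 (+) k2.2 (+) odd (ninv k1.1 k2.1))
  else gzero.

Definition wedge (x y : gelt) : gelt :=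
  gsum (fun k1 : gkey => gsum (fun k2 : gkey => gscale (x k1 * y k2) (wedge_basis k1 k2))).

Definition vec (c : 'I_n -> A) : gelt := gsum (fun i : 'I_n => gscale (c i) (gbasis ([set i], false))).
Definition unitv (i : 'I_n) : 'I_n -> A := fun j => if j == i then 1 else 0.

(* f in End_A(V_n), given by its matrix: f(b_i) = \sum_j M j i b_j *)
Definition fV (M : 'M[A]_n) (c : 'I_n -> A) : 'I_n -> A := fun j => \sum_i M j i * c i.

(* coefficient of z^k in D(z)c_1 /\ ... /\ D(z)c_r, with D(z)c = \sum_i f^i(c) z^i *)
Fixpoint DL (M : 'M[A]_n) (k : nat) (l : seq ('I_n -> A)) : gelt :=
  match l with
  | [::] => if k == 0%N then gone else gzero
  | c :: l' => gsum (fun i : 'I_k.+1 => wedge (vec (iter i (fV M) c)) (DL M (k - i) l'))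
  end.

Definition units (I : {set 'I_n}) : seq ('I_n -> A) := [seq unitv i | i <- enum I].

(* D_k : the k-th component of the Hasse-Schmidt derivation on /\ V_n, with
   D(z) b_I = D(z) b_{i_1} /\ ... /\ D(z) b_{i_r},  D(z) b_I' = (-) D(z) b_I *)
Definition Dk (M : 'M[A]_n) (k : nat) (x : gelt) : gelt :=
  gsum (fun key : gkey => gscale (x key) (gnegn key.2 (DL M k (units key.1)))).

(* sum over S subset of positions with |S| = j of u_1^S /\ ... /\ u_r^S *)
Fixpoint DbarL (M : 'M[A]_n) (j : nat) (l : seq ('I_n -> A)) : gelt :=
  match l with
  | [::] => if j == 0%N then gone else gzero
  | c :: l' => gadd (wedge (vec c) (DbarL M j l'))
                    (if j is j'.+1 then wedge (vec (fV M c)) (DbarL M j' l') else gzero)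
  end.

Definition Dbark (M : 'M[A]_n) (j : nat) (x : gelt) : gelt :=
  gsum (fun key : gkey => gscale (x key) (gnegn (j + key.2) (DbarL M j (units key.1)))).

Definition wedgeDbark (M : 'M[A]_n) (j : nat) (u v : gelt) : gelt :=
  gsum (fun key : gkey =>
          gscale (v key) (gnegn (j + key.2) (wedge u (DbarL M j (units key.1))))).

(* coefficient of z^m of  Dbar(z) (D(z) u /\ v)  *)
Definition lhs_coef (M : 'M[A]_n) (m : nat) (u v : gelt) : gelt :=
  gsum (fun i : 'I_m.+1 => Dbark M i (wedge (Dk M (m - i) u) v)).

Inductive qideal : gelt -> Prop :=
  | qideal0 : qideal gzero
  | qideal_qz x : wf x -> deg_ge2 x -> qideal (gadd x (gneg x))
  | qideal_ww c : qideal (wedge (vec c) (vec c))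
  | qideal_add d e : qideal d -> qideal e -> qideal (gadd d e)
  | qideal_mull a d : wf a -> qideal d -> qideal (wedge a d)
  | qideal_mulr a d : wf a -> qideal d -> qideal (wedge d a).

Definition succeq (x y : gelt) : Prop := exists d, qideal d /\ x = gadd y d.

End Grassmann.

(* Main.v *)
Require Import Defs.
From mathcomp Require Import all_boot all_order all_algebra.
Set Implicit Arguments.
Unset Strict Implicit.
Unset Printing Implicit Defensive.
Import GRing.Theory.
Local Open Scope ring_scope.

Section Basics.
Variables (A : comPzSemiRingType) (n : nat).
Local Notation gelt := (gelt A n).
Local Notation gkey := (gkey n).

Lemma gaddE (x y : gelt) : gadd x y = x + y. Proof. by []. Qed.
Lemma gzeroE : gzero A n = 0. Proof. by []. Qed.
Lemma gsumE (I : finType) (F : I -> gelt) : gsum F = \sum_i F i. Proof. by []. Qed.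

Lemma gscaleD a (x y : gelt) : gscale a (x + y) = gscale a x + gscale a y.
Proof. by apply/ffunP=> k; rewrite !ffunE mulrDr. Qed.
Lemma gscale0 a : gscale a (0 : gelt) = 0.
Proof. by apply/ffunP=> k; rewrite !ffunE mulr0. Qed.
Lemma gscale0l (x : gelt) : gscale 0 x = 0.
Proof. by apply/ffunP=> k; rewrite !ffunE mul0r. Qed.
Lemma gscaleDl a b (x : gelt) : gscale (a + b) x = gscale a x + gscale b x.
Proof. by apply/ffunP=> k; rewrite !ffunE mulrDl. Qed.
Lemma gscale1 (x : gelt) : gscale 1 x = x.
Proof. by apply/ffunP=> k; rewrite !ffunE mul1r. Qed.
Lemma gscaleA a b (x : gelt) : gscale a (gscale b x) = gscale (a * b) x.
Proof. by apply/ffunP=> k; rewrite !ffunE mulrA. Qed.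
Lemma gscale_sum a (I : finType) (F : I -> gelt) :
  gscale a (\sum_i F i) = \sum_i gscale a (F i).
Proof.
elim/big_rec2: _ => [|i y1 y2 _ IH]; first exact: gscale0.
by rewrite gscaleD IH.
Qed.
Lemma gscale_suml (I : finType) (F : I -> A) (x : gelt) :
  gscale (\sum_i F i) x = \sum_i gscale (F i) x.
Proof.
elim/big_rec2: _ => [|i y1 y2 _ IH]; first exact: gscale0l.
by rewrite gscaleDl IH.
Qed.

Lemma gnegD (x y : gelt) : gneg (x + y) = gneg x + gneg y.
Proof. by apply/ffunP=> k; rewrite !ffunE. Qed.
Lemma gneg0 : gneg (0 : gelt) = 0.
Proof. by apply/ffunP=> k; rewrite !ffunE. Qed.
Lemma gnegK (x : gelt) : gneg (gneg x) = x.
Proof. by apply/ffunP=> -[K b]; rewrite !ffunE /= negbK. Qed.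
Lemma gneg_scale a (x : gelt) : gneg (gscale a x) = gscale a (gneg x).
Proof. by apply/ffunP=> k; rewrite !ffunE. Qed.
Lemma gneg_sum (I : finType) (F : I -> gelt) :
  gneg (\sum_i F i) = \sum_i gneg (F i).
Proof.
elim/big_rec2: _ => [|i y1 y2 _ IH]; first exact: gneg0.
by rewrite gnegD IH.
Qed.

Lemma gnegnD j (x y : gelt) : gnegn j (x + y) = gnegn j x + gnegn j y.
Proof. by rewrite /gnegn; case: ifP => // _; rewrite gnegD. Qed.
Lemma gnegn0 j : gnegn j (0 : gelt) = 0.
Proof. by rewrite /gnegn; case: ifP => // _; rewrite gneg0. Qed.
Lemma gnegn_scale j a (x : gelt) : gnegn j (gscale a x) = gscale a (gnegn j x).
Proof. by rewrite /gnegn; case: ifP => // _; rewrite gneg_scale. Qed.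
Lemma gnegn_sum j (I : finType) (F : I -> gelt) :
  gnegn j (\sum_i F i) = \sum_i gnegn j (F i).
Proof. by rewrite /gnegn; case: ifP => // _; rewrite gneg_sum. Qed.
Lemma gnegnS j (x : gelt) : gnegn j.+1 x = gneg (gnegn j x).
Proof. by rewrite /gnegn /=; case: (odd j) => //=; rewrite gnegK. Qed.
Lemma gnegn_add i j (x : gelt) : gnegn (i + j) x = gnegn i (gnegn j x).
Proof.
rewrite /gnegn oddD; case: (odd i); case: (odd j) => //=; by rewrite gnegK.
Qed.
Lemma gnegn_neg j (x : gelt) : gnegn j (gneg x) = gneg (gnegn j x).
Proof. by rewrite /gnegn; case: ifP. Qed.
Lemma gnegn_odd j (x : gelt) : gnegn (odd j) x = gnegn j x.
Proof. by rewrite /gnegn oddb. Qed.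

Lemma gbasisE (k k' : gkey) : (gbasis A k) k' = if k' == k then 1 else 0.
Proof. by rewrite ffunE. Qed.

Lemma gexpand (x : gelt) : x = \sum_(k : gkey) gscale (x k) (gbasis A k).
Proof.
apply/ffunP=> k'; rewrite sum_ffunE (bigD1 k') //= big1 => [|k nk].
  by rewrite !ffunE eqxx mulr1 addr0.
by rewrite !ffunE eq_sym (negbTE nk) mulr0.
Qed.

End Basics.

Section Wedge.
Variables (A : comPzSemiRingType) (n : nat).
Local Notation gelt := (gelt A n).
Local Notation gkey := (gkey n).
Local Notation wedge := (@wedge A n).
Local Notation gbasis := (@gbasis A n).
Local Notation wedge_basis := (@wedge_basis A n).

Definition flipk (k : gkey) : gkey := (k.1, ~~ k.2).
Lemma flipkK : involutive flipk.
Proof. by case=> K b; rewrite /flipk /= negbK. Qed.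
Lemma flipk_inj : injective flipk. Proof. exact: inv_inj flipkK. Qed.

Lemma gneg_basis K b : gneg (gbasis (K, b)) = gbasis (K, ~~ b).
Proof.
apply/ffunP=> -[K' b']; rewrite !ffunE /= !xpair_eqE.
by case: (K' == K); case: b; case: b'.
Qed.

Lemma wb_flipl k1 k2 : wedge_basis (flipk k1) k2 = gneg (wedge_basis k1 k2).
Proof.
rewrite /wedge_basis /=; case: ifP => _; last by rewrite gneg0.
by rewrite gneg_basis; case: (k1.2); case: (k2.2); case: (odd _).
Qed.
Lemma wb_flipr k1 k2 : wedge_basis k1 (flipk k2) = gneg (wedge_basis k1 k2).
Proof.
rewrite /wedge_basis /=; case: ifP => _; last by rewrite gneg0.
by rewrite gneg_basis; case: (k1.2); case: (k2.2); case: (odd _).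
Qed.

Lemma wedgeE (x y : gelt) :
  wedge x y = \sum_(k1 : gkey) \sum_(k2 : gkey) gscale (x k1 * y k2) (wedge_basis k1 k2).
Proof. by []. Qed.

Lemma wedgeDl (x y z : gelt) : wedge (x + y) z = wedge x z + wedge y z.
Proof.
rewrite !wedgeE -big_split; apply: eq_bigr => k1 _.
rewrite -big_split; apply: eq_bigr => k2 _.
by rewrite ffunE mulrDl gscaleDl.
Qed.
Lemma wedgeDr (x y z : gelt) : wedge x (y + z) = wedge x y + wedge x z.
Proof.
rewrite !wedgeE -big_split; apply: eq_bigr => k1 _.
rewrite -big_split; apply: eq_bigr => k2 _.
by rewrite ffunE mulrDr gscaleDl.
Qed.
Lemma wedge0l (y : gelt) : wedge 0 y = 0.
Proof.
rewrite wedgeE big1 // => k1 _; rewrite big1 // => k2 _.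
by rewrite ffunE mul0r gscale0l.
Qed.
Lemma wedge0r (y : gelt) : wedge y 0 = 0.
Proof.
rewrite wedgeE big1 // => k1 _; rewrite big1 // => k2 _.
by rewrite ffunE mulr0 gscale0l.
Qed.
Lemma wedgeZl a (x y : gelt) : wedge (gscale a x) y = gscale a (wedge x y).
Proof.
rewrite !wedgeE gscale_sum; apply: eq_bigr => k1 _.
rewrite gscale_sum; apply: eq_bigr => k2 _.
by rewrite ffunE gscaleA mulrA.
Qed.
Lemma wedgeZr a (x y : gelt) : wedge x (gscale a y) = gscale a (wedge x y).
Proof.
rewrite !wedgeE gscale_sum; apply: eq_bigr => k1 _.
rewrite gscale_sum; apply: eq_bigr => k2 _.
by rewrite ffunE gscaleA mulrCA.
Qed.
Lemma wedge_suml (I : finType) (F : I -> gelt) (y : gelt) :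
  wedge (\sum_i F i) y = \sum_i wedge (F i) y.
Proof.
elim/big_rec2: _ => [|i y1 y2 _ IH]; first exact: wedge0l.
by rewrite wedgeDl IH.
Qed.
Lemma wedge_sumr (I : finType) (F : I -> gelt) (y : gelt) :
  wedge y (\sum_i F i) = \sum_i wedge y (F i).
Proof.
elim/big_rec2: _ => [|i y1 y2 _ IH]; first exact: wedge0r.
by rewrite wedgeDr IH.
Qed.
Lemma wedge_negl (x y : gelt) : wedge (gneg x) y = gneg (wedge x y).
Proof.
rewrite !wedgeE gneg_sum [LHS](reindex_inj flipk_inj); apply: eq_bigr => k1 _.
rewrite gneg_sum; apply: eq_bigr => k2 _.
by rewrite ffunE /= negbK wb_flipl gneg_scale; case: k1.
Qed.
Lemma wedge_negr (x y : gelt) : wedge x (gneg y) = gneg (wedge x y).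
Proof.
rewrite !wedgeE gneg_sum; apply: eq_bigr => k1 _.
rewrite gneg_sum [LHS](reindex_inj flipk_inj); apply: eq_bigr => k2 _.
by rewrite ffunE /= negbK wb_flipr gneg_scale; case: k2.
Qed.
Lemma wedge_gnegnl j (x y : gelt) : wedge (gnegn j x) y = gnegn j (wedge x y).
Proof. by rewrite /gnegn; case: ifP => // _; rewrite wedge_negl. Qed.
Lemma wedge_gnegnr j (x y : gelt) : wedge x (gnegn j y) = gnegn j (wedge x y).
Proof. by rewrite /gnegn; case: ifP => // _; rewrite wedge_negr. Qed.

Lemma sum_basis_scale k1 (F : gkey -> gelt) :
  \sum_k gscale (gbasis k1 k) (F k) = F k1.
Proof.
rewrite (bigD1 k1) // big1 /= => [|k nk]; first by rewrite ffunE eqxx gscale1 addr0.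
by rewrite ffunE (negbTE nk) gscale0l.
Qed.

Lemma wedge_basisE k1 k2 : wedge (gbasis k1) (gbasis k2) = wedge_basis k1 k2.
Proof.
rewrite wedgeE.
transitivity (\sum_k gscale (gbasis k1 k) (\sum_k' gscale (gbasis k2 k') (wedge_basis k k'))).
  apply: eq_bigr => k _; rewrite gscale_sum; apply: eq_bigr => k' _.
  by rewrite gscaleA.
rewrite sum_basis_scale; exact: sum_basis_scale.
Qed.

End Wedge.
Arguments wedge_basisE {A n} k1 k2.
Arguments gneg_basis {A n} K b.
Arguments sum_basis_scale {A n} k1 F.
Arguments wb_flipl {A n} k1 k2.
Arguments wb_flipr {A n} k1 k2.

Lemma disjUl (T : finType) (A B C : {set T}) :
  [disjoint A :|: B & C] = [disjoint A & C] && [disjoint B & C].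
Proof. by rewrite -!setI_eq0 setIUl setU_eq0. Qed.
Lemma disjUr (T : finType) (A B C : {set T}) :
  [disjoint A & B :|: C] = [disjoint A & B] && [disjoint A & C].
Proof. by rewrite -!setI_eq0 setIUr setU_eq0. Qed.

Section Assoc.
Variables (A : comPzSemiRingType) (n : nat).
Local Notation gelt := (gelt A n).
Local Notation gkey := (gkey n).
Local Notation wedge := (@wedge A n).
Local Notation gbasis := (@gbasis A n).
Local Notation wedge_basis := (@wedge_basis A n).

Lemma ninvUl (I J K : {set 'I_n}) : [disjoint I & J] ->
  ninv (I :|: J) K = (ninv I K + ninv J K)%N.
Proof.
move=> dIJ; rewrite /ninv -cardsUI.
set S1 := [set p | _]; set S2 := [set p | _]; set S3 := [set p | _].
have -> : S2 :&: S3 = set0.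
  apply/setP=> -[a b]; rewrite !inE /=.
  apply/negP=> /andP[/andP[/andP[aI _] _] /andP[/andP[aJ _] _]].
  by move: (disjointFr dIJ aI); rewrite aJ.
rewrite cards0 addn0; apply: eq_card => -[a b]; rewrite !inE /=.
by case: (a \in I); case: (a \in J); rewrite /= ?orbF ?orbb.
Qed.

Lemma ninvUr (I J K : {set 'I_n}) : [disjoint J & K] ->
  ninv I (J :|: K) = (ninv I J + ninv I K)%N.
Proof.
move=> dJK; rewrite /ninv -cardsUI.
set S1 := [set p | _]; set S2 := [set p | _]; set S3 := [set p | _].
have -> : S2 :&: S3 = set0.
  apply/setP=> -[a b]; rewrite !inE /=.
  apply/negP=> /andP[/andP[/andP[_ bJ] _] /andP[/andP[_ bK] _]].
  by move: (disjointFr dJK bJ); rewrite bK.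
rewrite cards0 addn0; apply: eq_card => -[a b]; rewrite !inE /=.
by case: (a \in I); case: (b \in J); case: (b \in K); rewrite /= ?andbF ?orbF ?orbb.
Qed.

Lemma wb_assoc k1 k2 k3 :
  wedge (wedge_basis k1 k2) (gbasis k3) = wedge (gbasis k1) (wedge_basis k2 k3).
Proof.
case: k1 k2 k3 => [K1 b1] [K2 b2] [K3 b3].
rewrite /wedge_basis /=.
case d12: [disjoint K1 & K2]; case d23: [disjoint K2 & K3]; rewrite ?wedge0l ?wedge0r //.
- rewrite !wedge_basisE. rewrite /wedge_basis /=. rewrite disjUl disjUr d12 d23.
  case d13: [disjoint K1 & K3] => //=.
  rewrite setUA ninvUl // ninvUr // !oddD.
  by case: b1; case: b2; case: b3; case: (odd (ninv K1 K2)); case: (odd (ninv K1 K3));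
     case: (odd (ninv K2 K3)).
- rewrite !wedge_basisE /wedge_basis /= disjUl d23 andbF.
  by [].
- by rewrite !wedge_basisE /wedge_basis /= disjUr d12.
Qed.

Lemma wedge_expandl (x y : gelt) :
  wedge x y = \sum_(k : gkey) gscale (x k) (wedge (gbasis k) y).
Proof.
rewrite {1}(gexpand x) wedge_suml; apply: eq_bigr => k _; exact: wedgeZl.
Qed.
Lemma wedge_expandr (x y : gelt) :
  wedge x y = \sum_(k : gkey) gscale (y k) (wedge x (gbasis k)).
Proof.
rewrite {1}(gexpand y) wedge_sumr; apply: eq_bigr => k _; exact: wedgeZr.
Qed.

Lemma wedge_assoc (x y z : gelt) : wedge (wedge x y) z = wedge x (wedge y z).
Proof.
transitivity (\sum_(k1 : gkey) \sum_(k2 : gkey) \sum_(k3 : gkey)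
   gscale (x k1 * y k2 * z k3) (wedge (gbasis k1) (wedge_basis k2 k3))).
  rewrite (wedgeE x y) wedge_suml; apply: eq_bigr => k1 _.
  rewrite wedge_suml; apply: eq_bigr => k2 _.
  rewrite wedgeZl wedge_expandr gscale_sum; apply: eq_bigr => k3 _.
  by rewrite gscaleA wb_assoc.
rewrite wedge_expandl; apply: eq_bigr => k1 _.
rewrite (wedgeE y z) wedge_sumr gscale_sum; apply: eq_bigr => k2 _.
rewrite wedge_sumr gscale_sum; apply: eq_bigr => k3 _.
by rewrite wedgeZr gscaleA mulrA.
Qed.

End Assoc.

Section Vec.
Variables (A : comPzSemiRingType) (n : nat).
Local Notation gelt := (gelt A n).
Local Notation gkey := (gkey n).
Local Notation wedge := (@wedge A n).
Local Notation gbasis := (@gbasis A n).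
Local Notation wedge_basis := (@wedge_basis A n).
Local Notation vec := (@vec A n).
Local Notation unitv := (@unitv A n).
Implicit Types (c d : 'I_n -> A).

Lemma vecE c : vec c = \sum_i gscale (c i) (gbasis ([set i], false)).
Proof. by []. Qed.
Lemma eq_vec c d : (forall i, c i = d i) -> vec c = vec d.
Proof. by move=> h; rewrite !vecE; apply: eq_bigr => i _; rewrite h. Qed.
Lemma vecD c d : vec (fun i => c i + d i) = vec c + vec d.
Proof. by rewrite !vecE -big_split; apply: eq_bigr => i _; rewrite gscaleDl. Qed.
Lemma vecZ a c : vec (fun i => a * c i) = gscale a (vec c).
Proof. by rewrite !vecE gscale_sum; apply: eq_bigr => i _; rewrite gscaleA. Qed.
Lemma vec0 : vec (fun _ => 0) = 0.
Proof. by rewrite vecE big1 // => i _; rewrite gscale0l. Qed.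
Lemma vec_sum' (I : finType) (F : I -> 'I_n -> A) :
  vec (fun i => \sum_j F j i) = \sum_j vec (F j).
Proof.
rewrite vecE.
under eq_bigr do rewrite gscale_suml.
by rewrite exchange_big.
Qed.
Lemma vec_unit i : vec (unitv i) = gbasis ([set i], false).
Proof.
rewrite vecE (bigD1 i) //= big1 => [|j nj]; first by rewrite /unitv eqxx gscale1 addr0.
by rewrite /unitv (negbTE nj) gscale0l.
Qed.
Lemma vec_expand c : vec c = \sum_i gscale (c i) (vec (unitv i)).
Proof. by rewrite vecE; apply: eq_bigr => i _; rewrite vec_unit. Qed.

Lemma fV_unit (M : 'M[A]_n) i j : fV M (unitv i) j = M j i.
Proof.
rewrite /fV (bigD1 i) //= big1 => [|k nk]; first by rewrite /unitv eqxx mulr1 addr0.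
by rewrite /unitv (negbTE nk) mulr0.
Qed.
Lemma vec_fV (M : 'M[A]_n) c :
  vec (fV M c) = \sum_i gscale (c i) (vec (fV M (unitv i))).
Proof.
rewrite /fV.
transitivity (vec (fun j => \sum_i c i * fV M (unitv i) j)).
  by apply: eq_vec => j; apply: eq_bigr => i _; rewrite fV_unit mulrC.
rewrite vec_sum'; apply: eq_bigr => i _; exact: vecZ.
Qed.

Lemma ninv11 (i j : 'I_n) : ninv [set i] [set j] = (j < i)%N.
Proof.
rewrite /ninv; case: ltnP => h /=.
  rewrite -(cards1 (i, j)); apply: eq_card => -[a b]; rewrite !inE /= xpair_eqE.
  by case: (a =P i) => [->|] //=; case: (b =P j) => [->|] //=; rewrite h.
apply/eqP; rewrite cards_eq0; apply/eqP/setP => -[a b]; rewrite !inE /=.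
apply/negP => /andP[/andP[/eqP -> /eqP ->]]; rewrite ltnNge h.
by [].
Qed.

Lemma wb_swap1 (i j : 'I_n) :
  wedge_basis ([set i], false) ([set j], false) =
  gneg (wedge_basis ([set j], false) ([set i], false)).
Proof.
rewrite /wedge_basis /= !disjoints1 !inE.
case: (i =P j) => [->|nij]; first by rewrite eqxx /= gneg0.
rewrite /= ifT; last by apply/eqP => e; apply: nij.
rewrite gneg_basis setUC !ninv11.
case: (ltngtP i j) => // e; exfalso; apply: nij; exact: val_inj.
Qed.

Lemma wedge_vec_vec c d : wedge (vec c) (vec d) =
  \sum_i \sum_j gscale (c i * d j) (wedge_basis ([set i], false) ([set j], false)).
Proof.
rewrite [vec c]vecE wedge_suml; apply: eq_bigr => i _.
rewrite wedgeZl vecE wedge_sumr gscale_sum; apply: eq_bigr => j _.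
by rewrite wedgeZr gscaleA wedge_basisE.
Qed.

Lemma vec_anti c d : wedge (vec c) (vec d) = gneg (wedge (vec d) (vec c)).
Proof.
rewrite !wedge_vec_vec gneg_sum exchange_big /=; apply: eq_bigr => j _.
rewrite gneg_sum; apply: eq_bigr => i _.
by rewrite wb_swap1 gneg_scale mulrC.
Qed.

Lemma unit_wedge_in (c : 'I_n) (K : {set 'I_n}) (b : bool) : c \in K ->
  wedge (vec (unitv c)) (gbasis (K, b)) = 0.
Proof.
by move=> cK; rewrite vec_unit wedge_basisE /wedge_basis /= disjoints1 cK.
Qed.
Lemma unit_wedge_notin (c : 'I_n) (K : {set 'I_n}) (b : bool) : c \notin K ->
  wedge (vec (unitv c)) (gbasis (K, b)) = gbasis (c |: K, b (+) odd (ninv [set c] K)).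
Proof.
by move=> cK; rewrite vec_unit wedge_basisE /wedge_basis /= disjoints1 cK.
Qed.
Lemma unit_wedge_self (c : 'I_n) : wedge (vec (unitv c)) (vec (unitv c)) = 0.
Proof. by rewrite [X in wedge _ X]vec_unit unit_wedge_in // set11. Qed.

End Vec.

Section Deg.
Variables (A : comPzSemiRingType) (n : nat).
Local Notation gelt := (gelt A n).
Local Notation gkey := (gkey n).
Local Notation wedge := (@wedge A n).
Local Notation gbasis := (@gbasis A n).
Local Notation wedge_basis := (@wedge_basis A n).
Local Notation vec := (@vec A n).
Local Notation unitv := (@unitv A n).

Definition ge1 (x : gelt) := forall b, x (set0, b) = 0.
Definition ge2 (x : gelt) := forall (K : {set 'I_n}) (b : bool), (#|K| <= 1)%N -> x (K, b) = 0.

Lemma wedge_pt (x y : gelt) (K : {set 'I_n}) (b : bool) :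
  (forall k1 k2 : gkey, [disjoint k1.1 & k2.1] -> K = k1.1 :|: k2.1 -> x k1 * y k2 = 0) ->
  wedge x y (K, b) = 0.
Proof.
move=> h; rewrite wedgeE sum_ffunE big1 // => k1 _; rewrite sum_ffunE big1 // => k2 _.
rewrite !ffunE /wedge_basis; case: ifP => dk; last by rewrite ffunE mulr0.
rewrite ffunE; case: eqP => [[eK _]|_]; last by rewrite mulr0.
by rewrite h // mul0r.
Qed.

Lemma ge1_wedgel x y : ge1 x -> ge1 (wedge x y).
Proof.
move=> hx b; apply: wedge_pt => -[K1 b1] k2 /= _ /esym /eqP.
by rewrite setU_eq0 => /andP[/eqP -> _]; rewrite hx mul0r.
Qed.
Lemma ge1_wedger x y : ge1 y -> ge1 (wedge x y).
Proof.
move=> hy b; apply: wedge_pt => k1 [K2 b2] /= _ /esym /eqP.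
by rewrite setU_eq0 => /andP[_ /eqP ->]; rewrite hy mulr0.
Qed.
Lemma ge2_wedgel x y : ge2 x -> ge2 (wedge x y).
Proof.
move=> hx K b hK; apply: wedge_pt => -[K1 b1] k2 /= _ eK.
rewrite hx ?mul0r //; apply: leq_trans hK; rewrite eK; apply: subset_leq_card.
exact: subsetUl.
Qed.
Lemma ge2_wedger x y : ge2 y -> ge2 (wedge x y).
Proof.
move=> hy K b hK; apply: wedge_pt => k1 [K2 b2] /= _ eK.
rewrite hy ?mulr0 //; apply: leq_trans hK; rewrite eK; apply: subset_leq_card.
exact: subsetUr.
Qed.
Lemma ge2_wedge11 x y : ge1 x -> ge1 y -> ge2 (wedge x y).
Proof.
move=> hx hy K b hK; apply: wedge_pt => -[K1 b1] [K2 b2] /= d eK.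
move: hK; rewrite eK -(leq_add2r #|K1 :&: K2|) cardsUI (disjoint_setI0 d) cards0 addn0.
case e1: #|K1| => [|k1].
  by move/eqP: e1; rewrite cards_eq0 => /eqP ->; rewrite hx mul0r.
case e2: #|K2| => [|k2].
  by move/eqP: e2; rewrite cards_eq0 => /eqP ->; rewrite hy mulr0.
by rewrite addSn addnS.
Qed.

Lemma ge1_0 : ge1 0. Proof. by move=> b; rewrite ffunE. Qed.
Lemma ge1_add x y : ge1 x -> ge1 y -> ge1 (x + y).
Proof. by move=> hx hy b; rewrite ffunE hx hy addr0. Qed.
Lemma ge1_sum (I : finType) (F : I -> gelt) : (forall i, ge1 (F i)) -> ge1 (\sum_i F i).
Proof.
move=> h; elim/big_ind: _ => //; [exact: ge1_0 | exact: ge1_add].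
Qed.
Lemma ge1_scale a x : ge1 x -> ge1 (gscale a x).
Proof. by move=> hx b; rewrite ffunE hx mulr0. Qed.
Lemma ge1_neg x : ge1 x -> ge1 (gneg x).
Proof. by move=> hx b; rewrite ffunE hx. Qed.
Lemma ge1_gnegn j x : ge1 x -> ge1 (gnegn j x).
Proof. by rewrite /gnegn; case: ifP => // _; apply: ge1_neg. Qed.
Lemma ge1_vec c : ge1 (vec c).
Proof.
apply: ge1_sum => i b; rewrite !ffunE /= xpair_eqE.
case: eqP => [e|]; last by rewrite mulr0.
by have := set11 i; rewrite -e inE.
Qed.

Lemma ge2_0 : ge2 0. Proof. by move=> K b _; rewrite ffunE. Qed.
Lemma ge2_add x y : ge2 x -> ge2 y -> ge2 (x + y).
Proof. by move=> hx hy K b h; rewrite ffunE hx ?hy ?addr0. Qed.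
Lemma ge2_sum (I : finType) (F : I -> gelt) : (forall i, ge2 (F i)) -> ge2 (\sum_i F i).
Proof.
move=> h; elim/big_ind: _ => //; [exact: ge2_0 | exact: ge2_add].
Qed.
Lemma ge2_scale a x : ge2 x -> ge2 (gscale a x).
Proof. by move=> hx K b h; rewrite ffunE hx ?mulr0. Qed.
Lemma ge2_neg x : ge2 x -> ge2 (gneg x).
Proof. by move=> hx K b h; rewrite ffunE hx. Qed.
Lemma ge2_gnegn j x : ge2 x -> ge2 (gnegn j x).
Proof. by rewrite /gnegn; case: ifP => // _; apply: ge2_neg. Qed.

Definition sym2 (d : gelt) := exists x, ge2 x /\ d = x + gneg x.

Lemma sym2_qideal d : sym2 d -> qideal d.
Proof.
case=> x [hx ->]; apply: qideal_qz.
- by move=> I hI; apply: hx.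
- by case=> K b /= hK; apply: hx.
Qed.

Lemma sym2_0 : sym2 0.
Proof. by exists 0; split; [exact: ge2_0 | rewrite gneg0 addr0]. Qed.
Lemma sym2_add d e : sym2 d -> sym2 e -> sym2 (d + e).
Proof.
case=> x [hx ->] [y [hy ->]]; exists (x + y); split; first exact: ge2_add.
by rewrite gnegD addrACA.
Qed.
Lemma sym2_sum (I : finType) (F : I -> gelt) : (forall i, sym2 (F i)) -> sym2 (\sum_i F i).
Proof.
move=> h; elim/big_ind: _ => //; [exact: sym2_0 | exact: sym2_add].
Qed.
Lemma sym2_scale a d : sym2 d -> sym2 (gscale a d).
Proof.
case=> x [hx ->]; exists (gscale a x); split; first exact: ge2_scale.
by rewrite gscaleD gneg_scale.
Qed.
Lemma sym2_neg d : sym2 d -> sym2 (gneg d).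
Proof.
case=> x [hx ->]; exists (gneg x); split; first exact: ge2_neg.
by rewrite gnegD gnegK addrC.
Qed.
Lemma sym2_gnegn j d : sym2 d -> sym2 (gnegn j d).
Proof. by rewrite /gnegn; case: ifP => // _; apply: sym2_neg. Qed.
Lemma sym2_wedgel d y : sym2 d -> sym2 (wedge d y).
Proof.
case=> x [hx ->]; exists (wedge x y); split; first exact: ge2_wedgel.
by rewrite wedgeDl wedge_negl.
Qed.
Lemma sym2_wedger d y : sym2 d -> sym2 (wedge y d).
Proof.
case=> x [hx ->]; exists (wedge y x); split; first exact: ge2_wedger.
by rewrite wedgeDr wedge_negr.
Qed.
Lemma sym2_self x : ge2 x -> sym2 (x + gneg x).
Proof. by move=> hx; exists x. Qed.
Lemma sym2_antisym d : ge2 d -> gneg d = d -> sym2 d.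
Proof.
move=> hd hn; exists [ffun k : gkey => if k.2 then 0 else d k]; split.
  by move=> K b hK; rewrite ffunE hd ?if_same.
apply/ffunP=> -[K b]; rewrite !ffunE /=.
have hK : d (K, true) = d (K, false) by rewrite -{1}hn ffunE.
by case: b; rewrite /= ?add0r ?addr0 // hK.
Qed.
Lemma sym2_ww c : sym2 (wedge (vec c) (vec c)).
Proof.
apply: sym2_antisym; first by apply: ge2_wedge11; apply: ge1_vec.
by rewrite [in RHS]vec_anti.
Qed.

Definition succ2 (x y : gelt) := exists2 d, sym2 d & x = y + d.

Lemma succ2_refl x : succ2 x x.
Proof. by exists 0; [exact: sym2_0 | rewrite addr0]. Qed.
Lemma succ2_trans x y z : succ2 x y -> succ2 y z -> succ2 x z.
Proof.
case=> d1 s1 -> [d2 s2 ->]; exists (d2 + d1); first exact: sym2_add.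
by rewrite addrA.
Qed.
Lemma succ2_eq x y : x = y -> succ2 x y.
Proof. by move=> ->; apply: succ2_refl. Qed.
Lemma succ2_add x1 y1 x2 y2 : succ2 x1 y1 -> succ2 x2 y2 -> succ2 (x1 + x2) (y1 + y2).
Proof.
case=> d1 s1 -> [d2 s2 ->]; exists (d1 + d2); first exact: sym2_add.
by rewrite addrACA.
Qed.
Lemma succ2_sym2 x d : sym2 d -> succ2 (x + d) x.
Proof. by move=> sd; exists d. Qed.
Lemma succ2_sum (I : finType) (F G : I -> gelt) :
  (forall i, succ2 (F i) (G i)) -> succ2 (\sum_i F i) (\sum_i G i).
Proof.
move=> h; elim/big_rec2: _ => [|i x y _ IH]; first exact: succ2_refl.
exact: succ2_add.
Qed.
Lemma succ2_scale a x y : succ2 x y -> succ2 (gscale a x) (gscale a y).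
Proof.
case=> d sd ->; exists (gscale a d); [exact: sym2_scale | exact: gscaleD].
Qed.
Lemma succ2_neg x y : succ2 x y -> succ2 (gneg x) (gneg y).
Proof.
case=> d sd ->; exists (gneg d); [exact: sym2_neg | exact: gnegD].
Qed.
Lemma succ2_gnegn j x y : succ2 x y -> succ2 (gnegn j x) (gnegn j y).
Proof. by rewrite /gnegn; case: ifP => // _; apply: succ2_neg. Qed.
Lemma succ2_wedgel z x y : succ2 x y -> succ2 (wedge z x) (wedge z y).
Proof.
case=> d sd ->; exists (wedge z d); [exact: sym2_wedger | exact: wedgeDr].
Qed.
Lemma succ2_wedger z x y : succ2 x y -> succ2 (wedge x z) (wedge y z).
Proof.
case=> d sd ->; exists (wedge d z); [exact: sym2_wedgel | exact: wedgeDl].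
Qed.

End Deg.

Definition ltO (n : nat) : rel 'I_n := fun x y => (x < y)%N.
Lemma ltO_trans n : transitive (@ltO n).
Proof. move=> y x z; exact: ltn_trans. Qed.
Lemma ltO_irr n : irreflexive (@ltO n).
Proof. move=> x; exact: ltnn. Qed.

Lemma sorted_enum n (K : {set 'I_n}) : sorted (@ltO n) (enum K).
Proof.
have -> : enum K = filter (mem K) (enum 'I_n) by rewrite enumT.
apply: sorted_filter; first exact: ltO_trans.
have := iota_ltn_sorted 0 n; rewrite -val_enum_ord sorted_map.
by [].
Qed.

Fixpoint ins n (c : 'I_n) (s : seq 'I_n) : seq 'I_n :=
  match s with
  | [::] => [:: c]
  | k :: s' => if (c < k)%N then c :: s else k :: ins c s'
  end.

Lemma mem_ins n (c : 'I_n) s : ins c s =i c :: s.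
Proof.
elim: s => [|k s IH] x //=; case: ifP => _ //.
by rewrite !inE IH !inE orbCA.
Qed.

Lemma sorted_ins n (c : 'I_n) s : c \notin s -> sorted (@ltO n) s -> sorted (@ltO n) (ins c s).
Proof.
elim: s => [|k s IH] //= ; rewrite inE negb_or => /andP[ck cs] ps.
case: ifP => ltck; first by rewrite /= {1}/ltO ltck ps.
have ltkc : (k < c)%N.
  rewrite ltn_neqAle leqNgt ltck andbT; apply/eqP => e; move/eqP: ck; apply.
  exact: val_inj.
have sIH := IH cs (path_sorted ps).
rewrite /= (path_sortedE (@ltO_trans n)) sIH andbT.
apply/allP => x; rewrite mem_ins inE => /orP[/eqP ->|xs]; first exact: ltkc.
move: ps; rewrite (path_sortedE (@ltO_trans n)) => /andP[/allP h _]; exact: h.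
Qed.

Lemma enum_setU1 n (c : 'I_n) (K : {set 'I_n}) : c \notin K ->
  enum (c |: K) = ins c (enum K).
Proof.
move=> cK; apply: (irr_sorted_eq (@ltO_trans n) (@ltO_irr n)).
- exact: sorted_enum.
- by apply: sorted_ins; rewrite ?mem_enum //; apply: sorted_enum.
by move=> x; rewrite mem_ins mem_enum !inE mem_enum.
Qed.

Lemma ninv1_count n (c : 'I_n) (K : {set 'I_n}) :
  ninv [set c] K = count (fun k : 'I_n => (k < c)%N) (enum K).
Proof.
rewrite /ninv.
have -> : [set p : 'I_n * 'I_n | (p.1 \in [set c]) && (p.2 \in K) && (p.2 < p.1)%N]
          = (fun k => (c, k)) @: [set k in K | (k < c)%N].
  apply/setP=> -[a b]; rewrite !inE /=; apply/idP/imsetP.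
    by case/andP=> /andP[/eqP -> bK] lt; exists b; rewrite // inE bK.
  by case=> k; rewrite inE => /andP[kK lt] [-> ->]; rewrite eqxx kK.
rewrite card_imset; last by move=> x y [].
rewrite cardE -size_filter; congr size.
apply: (irr_sorted_eq (@ltO_trans n) (@ltO_irr n)).
- exact: sorted_enum.
- apply: sorted_filter; [exact: ltO_trans | exact: sorted_enum].
by move=> x; rewrite mem_enum mem_filter inE mem_enum andbC.
Qed.

Section Dbar.
Variables (A : comPzSemiRingType) (n : nat) (M : 'M[A]_n).
Local Notation gelt := (gelt A n).
Local Notation gkey := (gkey n).
Local Notation wedge := (@wedge A n).
Local Notation gbasis := (@gbasis A n).
Local Notation vec := (@vec A n).
Local Notation unitv := (@unitv A n).
Local Notation units := (@units A n).
Local Notation f := (fV M).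
Local Notation DbarL := (DbarL M).
Local Notation Dbark := (Dbark M).

Lemma vswap a b (Z : gelt) :
  wedge (vec a) (wedge (vec b) Z) = gneg (wedge (vec b) (wedge (vec a) Z)).
Proof. by rewrite -!wedge_assoc vec_anti wedge_negl. Qed.

Definition T3 a b (l : seq ('I_n -> A)) j := wedge (vec a) (wedge (vec b) (DbarL j l)).

Lemma DbarL_cons a l j :
  DbarL j (a :: l) = wedge (vec a) (DbarL j l) +
     (if j is j'.+1 then wedge (vec (f a)) (DbarL j' l) else 0).
Proof. by []. Qed.

Lemma DbarL2 a b l j :
  DbarL j (a :: b :: l) = T3 a b l j +
    (if j is j'.+1 then T3 a (f b) l j' + T3 (f a) b l j' else 0) +
    (if j is j''.+2 then T3 (f a) (f b) l j'' else 0).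
Proof.
rewrite !DbarL_cons /T3; case: j => [|[|j]] /=; rewrite ?wedgeDr ?wedge0r ?addr0 //.
  by rewrite addrA.
by rewrite !addrA.
Qed.

Lemma T3_swap a b l j : T3 a b l j = gneg (T3 b a l j).
Proof. exact: vswap. Qed.

Lemma DbarL_swap a b l j : DbarL j (a :: b :: l) = gneg (DbarL j (b :: a :: l)).
Proof.
rewrite !DbarL2; case: j => [|[|j]] /=; rewrite !gnegD ?gneg0 -!T3_swap //;
  by congr (_ + _ + _); rewrite addrC.
Qed.

Lemma gnegnK j (x : gelt) : gnegn j (gnegn j x) = x.
Proof. by rewrite /gnegn; case: (odd j) => //=; rewrite gnegK. Qed.

Lemma DbarL_ins (c : 'I_n) (s : seq 'I_n) j :
  c \notin s -> sorted (@ltO n) s ->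
  DbarL j (unitv c :: map unitv s) =
  gnegn (count (fun k : 'I_n => (k < c)%N) s) (DbarL j (map unitv (ins c s))).
Proof.
elim: s j => [|k s IH] j; first by [].
rewrite inE negb_or => /andP[ck cs] ps.
change (ins c (k :: s)) with (if (c < k)%N then c :: k :: s else k :: ins c s).
case: ifP => ltck.
  have -> : count (fun k0 : 'I_n => (k0 < c)%N) (k :: s) = 0%N.
    apply/eqP; rewrite -leqn0 leqNgt -has_count; apply/hasP => -[x].
    rewrite inE => /orP[/eqP -> /= ltkc|xs /= ltxc].
      by move: (ltn_trans ltkc ltck); rewrite ltnn.
    move: ps; rewrite /= (path_sortedE (@ltO_trans n)) => /andP[/allP h _].
    have := h x xs; rewrite /ltO => ltkx.
    by move: (ltn_trans ltkx ltxc); rewrite ltnNge ltnW.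
  by [].
have ltkc : (k < c)%N.
  rewrite ltn_neqAle leqNgt ltck andbT; apply/eqP => e; move/eqP: ck; apply.
  exact: val_inj.
have -> : count (fun k0 : 'I_n => (k0 < c)%N) (k :: s) =
          (count (fun k0 : 'I_n => (k0 < c)%N) s).+1 by rewrite /= ltkc.
rewrite gnegnS [map _ (k :: s)]/= DbarL_swap; congr gneg.
have ps' := path_sorted ps.
rewrite [map _ (k :: _)]/= [in LHS]DbarL_cons [in RHS]DbarL_cons.
rewrite (IH j cs ps') wedge_gnegnr gnegnD; congr (_ + _).
case: j => [|j]; first by rewrite gnegn0.
by rewrite (IH j cs ps') wedge_gnegnr.
Qed.

Lemma units_setU1 (c : 'I_n) (K : {set 'I_n}) : c \notin K ->
  units (c |: K) = map unitv (ins c (enum K)).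
Proof. by move=> cK; rewrite /units enum_setU1. Qed.

Lemma DbarL_ins_set (c : 'I_n) (K : {set 'I_n}) j : c \notin K ->
  DbarL j (units (c |: K)) = gnegn (ninv [set c] K) (DbarL j (unitv c :: units K)).
Proof.
move=> cK; rewrite units_setU1 // DbarL_ins ?ninv1_count ?gnegnK //.
- by rewrite mem_enum.
- exact: sorted_enum.
Qed.

Lemma DbarkE j (x : gelt) :
  Dbark j x = \sum_(k : gkey) gscale (x k) (gnegn (j + k.2) (DbarL j (units k.1))).
Proof. by []. Qed.
Lemma Dbark_basis j K b :
  Dbark j (gbasis (K, b)) = gnegn (j + b) (DbarL j (units K)).
Proof. by rewrite DbarkE sum_basis_scale. Qed.
Lemma DbarkD j (x y : gelt) : Dbark j (x + y) = Dbark j x + Dbark j y.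
Proof. by rewrite !DbarkE -big_split; apply: eq_bigr => k _; rewrite ffunE gscaleDl. Qed.
Lemma Dbark0 j : Dbark j 0 = 0.
Proof. by rewrite DbarkE big1 // => k _; rewrite ffunE gscale0l. Qed.
Lemma DbarkZ j a (x : gelt) : Dbark j (gscale a x) = gscale a (Dbark j x).
Proof. by rewrite !DbarkE gscale_sum; apply: eq_bigr => k _; rewrite ffunE gscaleA. Qed.
Lemma Dbark_sum j (I : finType) (F : I -> gelt) :
  Dbark j (\sum_i F i) = \sum_i Dbark j (F i).
Proof.
elim/big_rec2: _ => [|i y1 y2 _ IH]; first exact: Dbark0.
by rewrite DbarkD IH.
Qed.
Lemma gnegn_flip j (b : bool) (y : gelt) : gnegn (j + ~~ b) y = gneg (gnegn (j + b) y).
Proof. by case: b; rewrite /= ?addn0 ?addn1 ?gnegnS ?gnegK. Qed.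
Lemma Dbark_neg j (x : gelt) : Dbark j (gneg x) = gneg (Dbark j x).
Proof.
rewrite !DbarkE gneg_sum [LHS](reindex_inj (@flipk_inj n)); apply: eq_bigr => k _.
rewrite !ffunE /= negbK gneg_scale -gnegn_flip; case: k => K b /=.
by [].
Qed.
Lemma Dbark_gnegn j i (x : gelt) : Dbark j (gnegn i x) = gnegn i (Dbark j x).
Proof. by rewrite /gnegn; case: ifP => // _; rewrite Dbark_neg. Qed.

Definition Dm1 t (x : gelt) := if t is t'.+1 then Dbark t' x else 0.

Lemma Dm1D t (x y : gelt) : Dm1 t (x + y) = Dm1 t x + Dm1 t y.
Proof. by case: t => [|t] /=; rewrite ?addr0 ?DbarkD. Qed.

Lemma gnegn_cancel t N (y : gelt) : gnegn (t + odd N) (gnegn N y) = gnegn t y.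
Proof.
rewrite -gnegn_add /gnegn !oddD oddb -addbA addbb addbF.
by [].
Qed.

Lemma leibniz (c : 'I_n) (K : {set 'I_n}) t : c \notin K ->
  Dbark t (wedge (vec (unitv c)) (gbasis (K, false))) =
  wedge (vec (unitv c)) (Dbark t (gbasis (K, false))) +
  gneg (wedge (vec (f (unitv c))) (Dm1 t (gbasis (K, false)))).
Proof.
move=> cK; rewrite unit_wedge_notin // (Dbark_basis t (c |: K)) DbarL_ins_set //.
rewrite /= gnegn_cancel gaddE gnegnD Dbark_basis addn0 wedge_gnegnr; congr (_ + _).
case: t => [|t] /=; first by rewrite gzeroE gnegn0 wedge0r gneg0.
by rewrite gnegnS Dbark_basis addn0 wedge_gnegnr.
Qed.

End Dbar.

Section Base.
Variables (A : comPzSemiRingType) (n : nat) (M : 'M[A]_n) (J : {set 'I_n}).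
Local Notation gelt := (gelt A n).
Local Notation gkey := (gkey n).
Local Notation wedge := (@wedge A n).
Local Notation gbasis := (@gbasis A n).
Local Notation vec := (@vec A n).
Local Notation unitv := (@unitv A n).
Local Notation units := (@units A n).
Local Notation f := (fV M).
Local Notation DbarL := (DbarL M).
Local Notation Dbark := (Dbark M).
Local Notation Dm1 := (Dm1 M).
Local Notation bJ := (gbasis (J, false)).

Definition Pj (x : 'I_n -> A) : 'I_n -> A := fun i => if i \in J then 0 else x i.
Definition Qj (x : 'I_n -> A) : 'I_n -> A := fun i => if i \in J then x i else 0.

Lemma vecPQ x : vec x = vec (Pj x) + vec (Qj x).
Proof.
rewrite -vecD; apply: eq_vec => i; rewrite /Pj /Qj.
by case: (i \in J); rewrite ?add0r ?addr0.
Qed.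

Lemma vec_scale_sum (x : 'I_n -> A) (F : 'I_n -> gelt) :
  \sum_i gscale (x i) (wedge (vec (unitv i)) (F i)) = \sum_i gscale (x i) (wedge (vec (unitv i)) (F i)).
Proof. by []. Qed.

Lemma I1 x p :
  Dbark p (wedge (vec x) bJ) =
  wedge (vec (Pj x)) (Dbark p bJ) + gneg (wedge (vec (f (Pj x))) (Dm1 p bJ)).
Proof.
rewrite vec_expand wedge_suml Dbark_sum.
rewrite [vec (Pj x)]vec_expand [vec (f (Pj x))]vec_fV !wedge_suml gneg_sum -big_split.
apply: eq_bigr => c _ /=; rewrite wedgeZl DbarkZ !wedgeZl gneg_scale -gscaleD /Pj.
case: ifP => cJ; first by rewrite unit_wedge_in // Dbark0 !gscale0l gscale0.
by rewrite leibniz // cJ.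
Qed.

Lemma bJ_split (c : 'I_n) : c \in J ->
  bJ = gnegn (ninv [set c] (J :\ c)) (wedge (vec (unitv c)) (gbasis (J :\ c, false))).
Proof.
move=> cJ; rewrite unit_wedge_notin ?setD11 // setD1K //= /gnegn.
by case: (odd _) => //; rewrite gneg_basis.
Qed.

Lemma ec_Dbar (c : 'I_n) t : c \in J ->
  wedge (vec (unitv c)) (Dbark t bJ) =
  gnegn (ninv [set c] (J :\ c))
    (gneg (wedge (vec (unitv c)) (wedge (vec (f (unitv c))) (Dm1 t (gbasis (J :\ c, false)))))).
Proof.
move=> cJ; rewrite {1}(bJ_split cJ) Dbark_gnegn leibniz ?setD11 //.
rewrite wedge_gnegnr wedgeDr -wedge_assoc unit_wedge_self wedge0l add0r.
by rewrite wedge_negr.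
Qed.

Lemma fec_Dbar (c : 'I_n) t : c \in J ->
  exists2 d, sym2 d &
  wedge (vec (f (unitv c))) (Dbark t bJ) = wedge (vec (unitv c)) (Dbark t.+1 bJ) + d.
Proof.
move=> cJ; rewrite ec_Dbar //= (bJ_split cJ) Dbark_gnegn leibniz ?setD11 //.
set s := ninv _ _; set X := gbasis (J :\ c, false).
exists (gnegn s (gneg (wedge (vec (f (unitv c))) (wedge (vec (f (unitv c))) (Dm1 t X))))).
  by apply/sym2_gnegn/sym2_neg; rewrite -wedge_assoc; apply/sym2_wedgel/sym2_ww.
rewrite wedge_gnegnr -gnegnD wedgeDr wedge_negr vswap.
by [].
Qed.

Lemma Qsum (x : 'I_n -> A) (G : ('I_n -> A) -> gelt) :
  (forall a b, G (fun i => a i + b i) = G a + G b) -> True.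
Proof. by []. Qed.

Lemma I3 x : wedge (vec (Qj x)) (Dbark 0 bJ) = 0.
Proof.
rewrite vec_expand wedge_suml big1 // => c _; rewrite wedgeZl /Qj.
case: ifP => cJ; last by rewrite gscale0l.
by rewrite ec_Dbar //= !wedge0r gneg0 gnegn0 gscale0.
Qed.

Lemma I2 x t :
  succ2 (wedge (vec (f (Qj x))) (Dbark t bJ)) (wedge (vec (Qj x)) (Dbark t.+1 bJ)).
Proof.
rewrite vec_fV [vec (Qj x)]vec_expand !wedge_suml; apply: succ2_sum => c.
rewrite !wedgeZl; case: (boolP (c \in J)) => cJ.
  by apply: succ2_scale; have [d sd ->] := fec_Dbar t cJ; exists d.
by rewrite /Qj /= (negbTE cJ) !gscale0l; apply: succ2_refl.
Qed.

Lemma I2' x t :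
  succ2 (wedge (vec (f (Qj x))) (Dbark t bJ)) (wedge (vec (Qj x)) (Dbark t.+1 bJ)).
Proof. exact: I2. Qed.

Lemma vec_fPQ x : vec (f x) = vec (f (Pj x)) + vec (f (Qj x)).
Proof.
rewrite -vecD; apply: eq_vec => j; rewrite /fV -big_split; apply: eq_bigr => i _ /=.
by rewrite -mulrDr /Pj /Qj; case: (i \in J); rewrite ?add0r ?addr0.
Qed.

Section Chain.
Variables (m : nat) (w : nat -> 'I_n -> A).
Hypothesis hw : forall r, (r < m)%N -> w r = f (w r.+1).
Local Notation D r := (Dbark r bJ).

Lemma chainE r : (r < m)%N ->
  succ2 (wedge (vec (Pj (w r))) (D r) + wedge (vec (Qj (w r))) (D r))
        (wedge (vec (f (Pj (w r.+1)))) (D r) + wedge (vec (Qj (w r.+1))) (D r.+1)).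
Proof.
move=> hr; rewrite -wedgeDl -vecPQ hw // vec_fPQ wedgeDl.
apply: succ2_add; [exact: succ2_refl | exact: I2].
Qed.

Lemma chain h : (h < m)%N ->
  succ2 (\sum_(r < h.+1) wedge (vec (Pj (w r))) (D r))
        (\sum_(r < h.+1) wedge (vec (f (Pj (w r.+1)))) (D r) + wedge (vec (Qj (w h.+1))) (D h.+1)).
Proof.
elim: h => [|h IH] hh.
  rewrite !big_ord_recr !big_ord0 /= !add0r.
  rewrite -[X in succ2 X _]addr0 -(I3 (w 0%N)); exact: chainE.
rewrite big_ord_recr /= [in X in succ2 _ X]big_ord_recr /=.
apply: succ2_trans (succ2_add (IH (ltnW hh)) (succ2_refl _)) _.
rewrite -!addrA; apply: succ2_add; first exact: succ2_refl.
rewrite addrC; exact: chainE.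
Qed.

End Chain.

Lemma ge1_DbarL (l : seq ('I_n -> A)) j : (0 < size l)%N -> ge1 (DbarL j l).
Proof.
case: l => [|a l] // _; rewrite DbarL_cons.
apply: ge1_add; first by apply: ge1_wedgel; apply: ge1_vec.
by case: j => [|j]; [exact: ge1_0 | apply: ge1_wedgel; apply: ge1_vec].
Qed.

Lemma ge1_DbJ t : J != set0 -> ge1 (Dbark t bJ).
Proof.
move=> hJ; rewrite Dbark_basis; apply/ge1_gnegn/ge1_DbarL.
rewrite /units; case e: (enum J) => [|a l] //.
case/set0Pn: hJ => a aJ; by rewrite -mem_enum e in aJ.
Qed.

Lemma base_w m (w : nat -> 'I_n -> A) : (forall r, (r < m)%N -> w r = f (w r.+1)) ->
  J != set0 ->
  succ2 (\sum_(i < m.+1) Dbark i (wedge (vec (w i)) bJ)) (wedge (vec (w m)) (Dbark m bJ)).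
Proof.
move=> hw hJ.
under eq_bigr do rewrite I1.
rewrite big_split /= [X in _ + X]big_ord_recl /= wedge0r gneg0 add0r.
under [X in _ + X]eq_bigr do rewrite /bump /= ?add0n ?add1n.
rewrite -gneg_sum.
case: m w hw => [|m] w hw.
  rewrite big_ord0 gneg0 addr0 big_ord_recr big_ord0 /=.
  apply: succ2_eq; rewrite [in RHS](vecPQ (w 0%N)) wedgeDl I3 addr0.
  exact: add0r.
rewrite big_ord_recr /=.
apply: succ2_trans (succ2_add (succ2_add (chain hw (ltnSn m)) (succ2_refl _)) (succ2_refl _)) _.
set G := \sum_(r < m.+1) _.
rewrite -(addrA G) [wedge (vec (Qj _)) _ + _]addrC -wedgeDl -vecPQ.
rewrite addrAC addrC; apply: succ2_sym2.
apply: sym2_self; apply: ge2_sum => r; apply: ge2_wedge11; first exact: ge1_vec.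
exact: ge1_DbJ.
Qed.

Lemma base (c : 'I_n -> A) m : J != set0 ->
  succ2 (\sum_(i < m.+1) Dbark i (wedge (vec (iter (m - i) f c)) bJ))
        (wedge (vec c) (Dbark m bJ)).
Proof.
move=> hJ; have := @base_w m (fun r => iter (m - r) f c).
rewrite subnn /=; apply => // r hr.
by rewrite -(subnSK hr).
Qed.

End Base.

Lemma tri (R : nmodType) (H : nat -> nat -> R) m :
  \sum_(i < m.+1) \sum_(j < (m - i).+1) H i j =
  \sum_(j < m.+1) \sum_(i < (m - j).+1) H i j.
Proof.
have E : forall (G : nat -> R) i, (i <= m)%N ->
    \sum_(j < (m - i).+1) G j = \sum_(j < m.+1 | (i + j <= m)%N) G j.
  move=> G i hi; rewrite -(big_mkord xpredT) (big_nat_widen 0 _ m.+1); last by rewrite ltnS leq_subr.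
  rewrite big_mkord; apply: eq_bigl => j /=; by rewrite ltnS leq_subRL.
transitivity (\sum_(i < m.+1) \sum_(j < m.+1) if (i + j <= m)%N then H i j else 0).
  apply: eq_bigr => i _; rewrite E ?big_mkcond //; by rewrite -ltnS.
rewrite exchange_big /=; apply: eq_bigr => j _.
rewrite (E (H^~ j) j); last by rewrite -ltnS.
rewrite [in RHS]big_mkcond; apply: eq_bigr => i _; by rewrite addnC.
Qed.

Section Main.
Variables (A : comPzSemiRingType) (n : nat) (M : 'M[A]_n).
Local Notation gelt := (gelt A n).
Local Notation gkey := (gkey n).
Local Notation wedge := (@wedge A n).
Local Notation gbasis := (@gbasis A n).
Local Notation vec := (@vec A n).
Local Notation unitv := (@unitv A n).
Local Notation units := (@units A n).
Local Notation f := (fV M).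
Local Notation DL := (DL M).
Local Notation Dk := (Dk M).
Local Notation Dbark := (Dbark M).

Lemma Dbark_expand j (x : gelt) :
  Dbark j x = \sum_(k : gkey) gscale (x k) (Dbark j (gbasis k)).
Proof. by rewrite DbarkE; apply: eq_bigr => -[K b] _; rewrite Dbark_basis. Qed.

Lemma base_gen (c : 'I_n -> A) m (V : gelt) : ge1 V ->
  succ2 (\sum_(i < m.+1) Dbark i (wedge (vec (iter (m - i) f c)) V))
        (wedge (vec c) (Dbark m V)).
Proof.
move=> hV.
under eq_bigr do rewrite wedge_expandr Dbark_sum.
rewrite exchange_big /= Dbark_expand wedge_sumr; apply: succ2_sum => -[K b].
under eq_bigr do rewrite DbarkZ.
rewrite -gscale_sum wedgeZr.
case: (K =P set0) => [->|/eqP hK]; first by rewrite hV !gscale0l; apply: succ2_refl.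
apply: succ2_scale; case: b.
  rewrite -(gneg_basis K false).
  under eq_bigr do rewrite wedge_negr Dbark_neg.
  rewrite -gneg_sum Dbark_neg wedge_negr; apply: succ2_neg; exact: base.
exact: base.
Qed.

Lemma DkE k (x : gelt) :
  Dk k x = \sum_(key : gkey) gscale (x key) (gnegn key.2 (DL k (units key.1))).
Proof. by []. Qed.
Lemma Dk_basis k K b : Dk k (gbasis (K, b)) = gnegn b (DL k (units K)).
Proof. by rewrite DkE sum_basis_scale. Qed.
Lemma Dk_neg k (x : gelt) : Dk k (gneg x) = gneg (Dk k x).
Proof.
rewrite !DkE gneg_sum [LHS](reindex_inj (@flipk_inj n)); apply: eq_bigr => -[K b] _.
rewrite !ffunE /= negbK gneg_scale; congr gscale.
by case: b; rewrite /gnegn /= ?gnegK.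
Qed.

Lemma lhs_coefE m u v :
  lhs_coef M m u v = \sum_(i < m.+1) Dbark i (wedge (Dk (m - i) u) v).
Proof. by []. Qed.

Lemma lhs_lin m u v :
  lhs_coef M m u v = \sum_(k : gkey) gscale (u k) (lhs_coef M m (gbasis k) v).
Proof.
rewrite lhs_coefE.
under eq_bigr do rewrite DkE wedge_suml Dbark_sum.
rewrite exchange_big /=; apply: eq_bigr => -[K b] _.
rewrite lhs_coefE gscale_sum; apply: eq_bigr => i _.
by rewrite Dk_basis wedgeZl DbarkZ.
Qed.

Lemma lhs_neg m u v : lhs_coef M m (gneg u) v = gneg (lhs_coef M m u v).
Proof.
rewrite !lhs_coefE gneg_sum; apply: eq_bigr => i _.
by rewrite Dk_neg wedge_negl Dbark_neg.
Qed.

Lemma wedge_one_l (x : gelt) : wedge (gbasis (set0, false)) x = x.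
Proof.
rewrite [in LHS]wedge_expandr [in RHS](gexpand x); apply: eq_bigr => -[K b] _.
rewrite wedge_basisE /wedge_basis /= -setI_eq0 set0I eqxx set0U.
congr (gscale _ (gbasis (_, _))).
have -> : ninv set0 K = 0%N.
  apply/eqP; rewrite cards_eq0; apply/eqP/setP => -[a c]; rewrite !inE.
  by [].
by rewrite addbF.
Qed.

Definition Goal (u : gelt) :=
  forall m v, ge1 v -> succ2 (lhs_coef M m u v) (wedge u (Dbark m v)).

Lemma enum_sorted (s : seq 'I_n) : sorted (@ltO n) s -> enum [set x in s] = s.
Proof.
move=> ss; apply: (irr_sorted_eq (@ltO_trans n) (@ltO_irr n)) => //.
  exact: sorted_enum.
by move=> x; rewrite mem_enum inE.
Qed.

Lemma Goal_nil : Goal (gbasis (set0, false)).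
Proof.
move=> m v hv; apply: succ2_eq; rewrite wedge_one_l lhs_coefE big_ord_recr /=.
rewrite big1 ?add0r => [|i _].
  rewrite subnn Dk_basis /units enum_set0 /= wedge_one_l.
  by [].
rewrite Dk_basis /units enum_set0 /=.
have -> : (m - i == 0)%N = false by rewrite subn_eq0 leqNgt ltn_ord.
by rewrite gzeroE wedge0l Dbark0.
Qed.

End Main.

Section Induct.
Variables (A : comPzSemiRingType) (n : nat) (M : 'M[A]_n).
Local Notation gelt := (gelt A n).
Local Notation gkey := (gkey n).
Local Notation wedge := (@wedge A n).
Local Notation gbasis := (@gbasis A n).
Local Notation vec := (@vec A n).
Local Notation unitv := (@unitv A n).
Local Notation units := (@units A n).
Local Notation f := (fV M).
Local Notation DL := (DL M).
Local Notation Dk := (Dk M).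
Local Notation Dbark := (Dbark M).

Lemma gnegnF (x : gelt) : gnegn false x = x. Proof. by []. Qed.

Lemma DL_cons k a l :
  DL k (a :: l) = \sum_(i < k.+1) wedge (vec (iter i f a)) (DL (k - i) l).
Proof. by []. Qed.

Lemma rev_sum (F : nat -> gelt) m :
  \sum_(i < m.+1) F i = \sum_(i < m.+1) F (m - i)%N.
Proof.
rewrite [LHS](reindex_inj rev_ord_inj) /=; apply: eq_bigr => i _.
by rewrite subSS.
Qed.

Lemma Goal_sorted (s : seq 'I_n) : sorted (@ltO n) s -> Goal M (gbasis ([set x in s], false)).
Proof.
elim: s => [|k s IH] hs.
  have -> : [set x in [::]] = set0 :> {set 'I_n} by apply/setP => x; rewrite !inE.
  exact: Goal_nil.
have hs' : sorted (@ltO n) s := path_sorted hs.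
have allk : all (@ltO n k) s by move: hs; rewrite /= (path_sortedE (@ltO_trans n)) => /andP[].
have ks : k \notin [set x in s].
  rewrite inE; apply/negP => ks; move/allP: allk => /(_ k ks); by rewrite /ltO ltnn.
have eS : [set x in k :: s] = k |: [set x in s] by apply/setP => x; rewrite !inE.
have n0 : ninv [set k] [set x in s] = 0%N.
  rewrite ninv1_count enum_sorted //; apply/eqP; rewrite -leqn0 leqNgt -has_count.
  apply/hasP => -[x xs /= ltxk]; move/allP: allk => /(_ x xs); rewrite /ltO => ltkx.
  by move: (ltn_trans ltxk ltkx); rewrite ltnn.
have eb : gbasis ([set x in k :: s], false) = wedge (vec (unitv k)) (gbasis ([set x in s], false)).
  by rewrite unit_wedge_notin // n0 eS.
have eu : units [set x in k :: s] = unitv k :: units [set x in s].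
  by rewrite /units !enum_sorted.
move=> m v hv.
set S := [set x in s].
set X := fun j => wedge (DL j (units S)) v.
have e1 : lhs_coef M m (gbasis ([set x in k :: s], false)) v =
   \sum_(j < m.+1) \sum_(i < (m - j).+1)
      Dbark i (wedge (vec (iter (m - j - i) f (unitv k))) (X j)).
  rewrite lhs_coefE.
  under eq_bigr do rewrite Dk_basis eu gnegnF DL_cons wedge_suml Dbark_sum.
  transitivity (\sum_(i < m.+1) \sum_(j < (m - i).+1)
     Dbark i (wedge (vec (iter (m - i - j) f (unitv k))) (X j))).
    apply: eq_bigr => i _; rewrite [LHS](reindex_inj rev_ord_inj) /=.
    apply: eq_bigr => j _; rewrite wedge_assoc subSS subKn //.
    by rewrite -ltnS.
  rewrite (tri (fun i j => Dbark i (wedge (vec (iter (m - i - j) f (unitv k))) (X j)))).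
  by apply: eq_bigr => j _; apply: eq_bigr => i _; rewrite subnAC.
rewrite e1.
have h1 : succ2 (\sum_(j < m.+1) \sum_(i < (m - j).+1)
      Dbark i (wedge (vec (iter (m - j - i) f (unitv k))) (X j)))
    (\sum_(j < m.+1) wedge (vec (unitv k)) (Dbark (m - j) (X j))).
  by apply: succ2_sum => j; apply: base_gen; apply: ge1_wedger.
apply: succ2_trans h1 _.
rewrite -wedge_sumr eb wedge_assoc; apply: succ2_wedgel.
have e2 : \sum_(j < m.+1) Dbark (m - j) (X j) = lhs_coef M m (gbasis (S, false)) v.
  rewrite lhs_coefE [LHS](rev_sum (fun j => Dbark (m - j) (X j))).
  apply: eq_bigr => i _; rewrite subKn ?Dk_basis ?gnegnF //.
  by rewrite -ltnS.
by rewrite e2; apply: IH.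
Qed.


End Induct.

Lemma Goal_all (A : comPzSemiRingType) (n : nat) (M : 'M[A]_n) (u : gelt A n) : Goal M u.
Proof.
move=> m v hv; rewrite lhs_lin [in X in succ2 _ X]wedge_expandl.
apply: succ2_sum => -[K b]; apply: succ2_scale.
have eK : K = [set x in enum K] by apply/setP => x; rewrite inE mem_enum.
case: b.
  rewrite -(gneg_basis K false) lhs_neg wedge_negl; apply: succ2_neg.
  rewrite eK; apply: Goal_sorted => //; exact: sorted_enum.
rewrite eK; apply: Goal_sorted => //; exact: sorted_enum.
Qed.

Lemma wedgeDbarkE (A : comPzSemiRingType) (n : nat) (M : 'M[A]_n) j (u v : gelt A n) :
  wedgeDbark M j u v = wedge u (Dbark M j v).
Proof.
rewrite /wedgeDbark DbarkE wedge_sumr; apply: eq_bigr => k _.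
by rewrite wedgeZr wedge_gnegnr.
Qed.

Local Close Scope ring_scope.

Theorem theorem3p5 (A : comPzSemiRingType) (n : nat) (M : 'M[A]_n)
    (u v : gelt A n) :
  (2 <= n)%N -> pos_part u -> pos_part v ->
  forall m : nat, succeq (lhs_coef M m u v) (wedgeDbark M m u v).
Proof.
move=> _ _ [wfv v0] m.
have hv : ge1 v by case; [apply: wfv; rewrite cards0 | exact: v0].
have [d sd e] := Goal_all M u m hv.
exists d; split; first exact: sym2_qideal.
by rewrite e wedgeDbarkE.
Qed.
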